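(* Every tame topological Kuranishi atlas $\mathcal K$ has a reduction.
   Context: Notation: for subsets $V'\subset V$ of a topological space, $V'\sqsubset V$ means the closure of $V'$ in $V$ is compact. $X$ is a compact metrizable space. Charts: a topological Kuranishi chart for $X$ with open footprint $F\subset X$ is a tuple $\mathbf K=(U,\mathbb E,\mathfrak s,\psi)$ where $U$ is a separable, locally compact, metrizable space; $\mathbb E$ is a separable, locally compact, metrizable space with continuous maps $\mathrm{pr}:\mathbb E\to U$ and $0:U\to\mathbb E$ with $\mathrm{pr}\circ0=\mathrm{id}_U$; $\mathfrak s:U\to\mathbb E$ is continuous with $\mathrm{pr}\circ\mathfrak s=\mathrm{id}_U$; and $\psi$ is a homeomorphism from $\mathfrak s^{-1}(0):=\{x\in U:\mathfrak s(x)=0(x)\}$ onto $F$. Coordinate changes: for charts $\mathbf K_I,\mathbf K_J$ with $F_I\cap F_J\neq\emptyset$, a coordinate change $\widehat\Phi_{IJ}:\mathbf K_I\to\mathbf K_J$ consists of an open set $U_{IJ}\subset U_I$ with $U_{IJ}\cap\mathfrak s_I^{-1}(0_I)=\psi_I^{-1}(F_I\cap F_J)$ and a topological embedding $\widehat\Phi_{IJ}:\mathrm{pr}_I^{-1}(U_{IJ})\to\mathbb E_J$ such that there is a topological embedding $\phi_{IJ}:U_{IJ}\to U_J$ with $\mathrm{pr}_J\circ\widehat\Phi_{IJ}=\phi_{IJ}\circ\mathrm{pr}_I$, $0_J\circ\phi_{IJ}=\widehat\Phi_{IJ}\circ0_I$ and $\mathfrak s_J\circ\phi_{IJ}=\widehat\Phi_{IJ}\circ\mathfrak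 s_I$ on $U_{IJ}$, and $\phi_{IJ}=\psi_J^{-1}\circ\psi_I$ on $U_{IJ}\cap\mathfrak s_I^{-1}(0_I)$. Atlases: a covering family of basic charts is a finite family $(\mathbf K_i)_{i=1,\dots,N}$ of charts whose footprints cover $X$; $\mathcal I_{\mathcal K}$ is the set of nonempty $I\subset\{1,\dots,N\}$ with $F_I:=\bigcap_{i\in I}F_i\neq\emptyset$. Transition data consist of a chart $\mathbf K_J$ with footprint $F_J$ for each $J\in\mathcal I_{\mathcal K}$ with $|J|\ge2$ (and $\mathbf K_{\{i\}}:=\mathbf K_i$), and a coordinate change $\widehat\Phi_{IJ}:\mathbf K_I\to\mathbf K_J$ for all $I\subsetneq J$ in $\mathcal I_{\mathcal K}$. We set $U_{II}:=U_I$, $\phi_{II}:=\mathrm{id}_{U_I}$. For $I\subsetneq J\subsetneq K$ let $U_{IJK}:=U_{IJ}\cap\phi_{IJ}^{-1}(U_{JK})$. The triple satisfies the weak cocycle condition if $\widehat\Phi_{JK}\circ\widehat\Phi_{IJ}=\widehat\Phi_{IK}$ on $\mathrm{pr}_I^{-1}(U_{IJK}\cap U_{IK})$; the cocycle condition if in addition $U_{IJK}\subset U_{IK}$; the strong cocycle condition if in addition $U_{IJK}=U_{IK}$. A weak topological Kuranishi atlas $\mathcal K$ is a covering family with transition data satisfying the weak cocycle condition for all such triples; a topological Kuranishi atlas is one satisfying the cocycle condition for all triples. Filtrations: a weak topological Kuranishi atlas is filtered if it is equipped with closed subsets $\mathbb E_{IJ}\subset\mathbb E_J$ for all $J\in\mathcal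 I_{\mathcal K}$ and $I\subset J$ (including $I=\emptyset$) such that (i) $\mathbb E_{JJ}=\mathbb E_J$ and $\mathbb E_{\emptyset J}=\mathrm{im}\,0_J$; (ii) $\widehat\Phi_{JK}(\mathrm{pr}_J^{-1}(U_{JK})\cap\mathbb E_{IJ})=\mathbb E_{IK}\cap\mathrm{pr}_K^{-1}(\mathrm{im}\,\phi_{JK})$ for $I\subset J\subsetneq K$; (iii) $\mathbb E_{IJ}\cap\mathbb E_{HJ}=\mathbb E_{(I\cap H)J}$ for $I,H\subset J$; (iv) $\mathrm{im}\,\phi_{IJ}$ is an open subset of $\mathfrak s_J^{-1}(\mathbb E_{IJ})$ for $I\subsetneq J$. Tameness: a filtered weak topological Kuranishi atlas is tame if $U_{IJ}\cap U_{IK}=U_{I(J\cup K)}$ for all $I,J,K\in\mathcal I_{\mathcal K}$ with $I\subset J,K$ (where $U_{IL}:=\emptyset$ if $L\notin\mathcal I_{\mathcal K}$), and $\phi_{IJ}(U_{IK})=U_{JK}\cap\mathfrak s_J^{-1}(\mathbb E_{IJ})$ for all $I\subset J\subset K$ in $\mathcal I_{\mathcal K}$ (equalities of indices allowed). Virtual neighbourhood: for a topological Kuranishi atlas, $|\mathcal K|$ is the quotient of $\bigsqcup_{I\in\mathcal I_{\mathcal K}}U_I=\{(I,x):x\in U_I\}$ by the equivalence relation generated by $(I,x)\sim(J,\phi_{IJ}(x))$ for $I\subset J$, $x\in U_{IJ}$, with the quotient topology and projection $\pi_{\mathcal K}$; $\iota_{\mathcal K}(X):=\pi_{\mathcal K}\big(\bigsqcup_I\{I\}\times\mathfrak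 s_I^{-1}(0_I)\big)\subset|\mathcal K|$. Reductions: a reduction of a tame topological Kuranishi atlas $\mathcal K$ is a tuple $\mathcal V=\bigsqcup_{I\in\mathcal I_{\mathcal K}}V_I$ of (possibly empty) open subsets $V_I\subset U_I$ such that (i) $V_I\sqsubset U_I$ for all $I$, and $V_I\neq\emptyset$ implies $V_I\cap\mathfrak s_I^{-1}(0_I)\neq\emptyset$; (ii) if $\pi_{\mathcal K}(\overline{V_I})\cap\pi_{\mathcal K}(\overline{V_J})\neq\emptyset$ (closures in $U_I$, $U_J$) then $I\subset J$ or $J\subset I$; (iii) $\iota_{\mathcal K}(X)\subset\pi_{\mathcal K}(\mathcal V)=\bigcup_I\pi_{\mathcal K}(V_I)$. *)

(* Defs.v *)
From Stdlib Require Import Reals List.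
From mathcomp Require Import all_boot.

Set Implicit Arguments.
Unset Strict Implicit.
Unset Printing Implicit Defensive.

Record topology (T : Type) := Topology {
  opn : (T -> Prop) -> Prop;
  opn_setT : opn (fun _ => True);
  opn_I : forall A B, opn A -> opn B -> opn (fun x => A x /\ B x);
  opn_U : forall F : (T -> Prop) -> Prop,
      (forall A, F A -> opn A) -> opn (fun x => exists A, F A /\ A x)
}.

Record topSpace := TopSpace { carrier :> Type; top : topology carrier }.

Definition isOpen (T : topSpace) (A : T -> Prop) : Prop := opn (top T) A.
Definition isClosed (T : topSpace) (A : T -> Prop) : Prop :=
  isOpen (fun x => ~ A x).

Definition closure (T : topSpace) (A : T -> Prop) : T -> Prop :=
  fun x => forall O, isOpen O -> O x -> exists y, O y /\ A y.

Definition rel_open (T : topSpace) (S A : T -> Prop) : Prop :=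
  (forall x, A x -> S x) /\
  exists O, isOpen O /\ forall x, S x -> (A x <-> O x).

Definition compact (T : topSpace) (K : T -> Prop) : Prop :=
  forall C : (T -> Prop) -> Prop,
    (forall O, C O -> isOpen O) ->
    (forall x, K x -> exists O, C O /\ O x) ->
    exists l : list (T -> Prop),
      (forall O, In O l -> C O) /\ (forall x, K x -> exists O, In O l /\ O x).

Definition compact_space (T : topSpace) : Prop := compact (fun _ : T => True).

Definition rel_compact (T : topSpace) (V : T -> Prop) : Prop :=
  compact (closure V).

Definition is_metric (T : Type) (d : T -> T -> R) : Prop :=
  (forall x y, Rle 0 (d x y)) /\
  (forall x y, d x y = R0 <-> x = y) /\
  (forall x y, d x y = d y x) /\
  (forall x y z, Rle (d x z) (Rplus (d x y) (d y z))).

Definition metric_open (T : Type) (d : T -> T -> R) (O : T -> Prop) : Prop :=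
  forall x, O x -> exists eps, Rlt 0 eps /\ forall y, Rlt (d x y) eps -> O y.

Definition metrizable (T : topSpace) : Prop :=
  exists d : T -> T -> R, is_metric d /\
    forall O, isOpen O <-> metric_open d O.

Definition countable_set (T : Type) (D : T -> Prop) : Prop :=
  exists g : T -> nat, forall x y, D x -> D y -> g x = g y -> x = y.

Definition separable (T : topSpace) : Prop :=
  exists D : T -> Prop, countable_set D /\
    forall O, isOpen O -> (exists x, O x) -> exists y, O y /\ D y.

Definition locally_compact (T : topSpace) : Prop :=
  forall x : T, exists (O K : T -> Prop),
    isOpen O /\ O x /\ (forall y, O y -> K y) /\ compact K.

Definition slcm (T : topSpace) : Prop :=
  separable T /\ locally_compact T /\ metrizable T.

Definition continuous (S T : topSpace) (f : S -> T) : Prop :=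
  forall O, isOpen O -> isOpen (fun x => O (f x)).

Definition continuous_on (S T : topSpace) (A : S -> Prop) (f : S -> T) : Prop :=
  forall O, isOpen O ->
    exists O', isOpen O' /\ forall x, A x -> (O (f x) <-> O' x).

Definition embedding_on (S T : topSpace) (A : S -> Prop) (f : S -> T) : Prop :=
  continuous_on A f /\
  (forall x y, A x -> A y -> f x = f y -> x = y) /\
  (forall O, isOpen O -> exists O', isOpen O' /\
     forall y, (exists x, A x /\ f x = y) ->
       ((exists x, A x /\ O x /\ f x = y) <-> O' y)).

Definition homeo_onto (S T : topSpace) (A : S -> Prop) (B : T -> Prop)
    (f : S -> T) : Prop :=
  embedding_on A f /\ (forall y, B y <-> exists x, A x /\ f x = y).

Record chart (X : topSpace) := Chart {
  cU : topSpace;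
  cE : topSpace;
  cpr : cE -> cU;
  czero : cU -> cE;
  cs : cU -> cE;
  cpsi : cU -> X;
  cF : X -> Prop
}.

Arguments cpr {X} c _.
Arguments czero {X} c _.
Arguments cs {X} c _.
Arguments cpsi {X} c _.
Arguments cF {X} c _.

Definition zset (X : topSpace) (K : chart X) : cU K -> Prop :=
  fun x => cs K x = czero K x.

Arguments zset {X} K _.

Definition is_chart (X : topSpace) (K : chart X) : Prop :=
  isOpen (cF K) /\
  slcm (cU K) /\ slcm (cE K) /\
  continuous (cpr K) /\ continuous (czero K) /\
  (forall x, cpr K (czero K x) = x) /\
  continuous (cs K) /\ (forall x, cpr K (cs K x) = x) /\
  homeo_onto (zset K) (cF K) (cpsi K).

(* Charts are indexed by all subsets of {1..N} (as {set 'I_N}); only the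
   charts with index in I_K matter.  Coordinate-change data
   (U_IJ, Phi_IJ, phi_IJ) and filtration data E_IJ are given for all
   pairs and only constrained where the paper defines them. *)
Record atlas_data (X : topSpace) (N : nat) := AtlasData {
  ch : {set 'I_N} -> chart X;
  aU : forall I J : {set 'I_N}, cU (ch I) -> Prop;
  aPhi : forall I J : {set 'I_N}, cE (ch I) -> cE (ch J);
  aphi : forall I J : {set 'I_N}, cU (ch I) -> cU (ch J);
  aE : forall I J : {set 'I_N}, cE (ch J) -> Prop
}.

Arguments ch {X N} a _.
Arguments aU {X N} a I J _.
Arguments aPhi {X N} a I J _.
Arguments aphi {X N} a I J _.
Arguments aE {X N} a I J _.

Section AtlasDefs.
Local Unset Implicit Arguments.
Variables (X : topSpace) (N : nat) (K : atlas_data X N).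

Local Notation U I := (cU (ch K I)).
Local Notation E I := (cE (ch K I)).
Local Notation pr I := (cpr (ch K I)).
Local Notation z0 I := (czero (ch K I)).
Local Notation s I := (cs (ch K I)).
Local Notation psi I := (cpsi (ch K I)).
Local Notation Z I := (zset (ch K I)).

Definition FI (I : {set 'I_N}) : X -> Prop :=
  fun x => forall i, i \in I -> cF (ch K [set i]) x.

Definition inIK (I : {set 'I_N}) : Prop := I != set0 /\ exists x, FI I x.

Definition covering_family : Prop :=
  (forall i : 'I_N, is_chart (ch K [set i])) /\
  (forall x : X, exists i : 'I_N, cF (ch K [set i]) x).

Definition transition_charts : Prop :=
  forall J : {set 'I_N}, inIK J -> is_chart (ch K J) /\ (forall x, cF (ch K J) x <-> FI J x).

Definition diag_conventions : Prop :=
  forall I : {set 'I_N}, inIK I -> (forall x, aU K I I x) /\ (forall x, aphi K I I x = x).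

Definition coord_change (I J : {set 'I_N}) : Prop :=
  isOpen (aU K I J) /\
  (forall x, (aU K I J x /\ Z I x) <->
             (Z I x /\ cF (ch K I) (psi I x) /\ cF (ch K J) (psi I x))) /\
  embedding_on (fun e => aU K I J (pr I e)) (aPhi K I J) /\
  embedding_on (aU K I J) (aphi K I J) /\
  (forall e, aU K I J (pr I e) -> pr J (aPhi K I J e) = aphi K I J (pr I e)) /\
  (forall x, aU K I J x -> z0 J (aphi K I J x) = aPhi K I J (z0 I x)) /\
  (forall x, aU K I J x -> s J (aphi K I J x) = aPhi K I J (s I x)) /\
  (forall x, aU K I J x -> Z I x ->
             Z J (aphi K I J x) /\ psi J (aphi K I J x) = psi I x).

Definition coord_changes : Prop :=
  forall I J : {set 'I_N}, inIK I -> inIK J -> I \proper J -> coord_change I J.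

Definition UIJK (I J L : {set 'I_N}) : U I -> Prop :=
  fun x => aU K I J x /\ aU K J L (aphi K I J x).


Definition weak_cocycle : Prop :=
  forall I J L : {set 'I_N}, inIK I -> inIK J -> inIK L -> I \proper J -> J \proper L ->
    forall e, UIJK I J L (pr I e) -> aU K I L (pr I e) ->
      aPhi K J L (aPhi K I J e) = aPhi K I L e.

Definition cocycle : Prop :=
  weak_cocycle /\
  forall I J L : {set 'I_N}, inIK I -> inIK J -> inIK L -> I \proper J -> J \proper L ->
    forall x, UIJK I J L x -> aU K I L x.

Definition top_atlas : Prop :=
  covering_family /\ transition_charts /\ diag_conventions /\
  coord_changes /\ cocycle.

Definition filtered : Prop :=
  (forall I J : {set 'I_N}, inIK J -> I \subset J -> isClosed (aE K I J)) /\
  (forall J : {set 'I_N}, inIK J -> (forall e, aE K J J e) /\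
     (forall e, aE K set0 J e <-> exists x, z0 J x = e)) /\
  (forall I J L : {set 'I_N}, inIK J -> inIK L -> I \subset J -> J \proper L ->
     forall f, (exists e, aU K J L (pr J e) /\ aE K I J e /\ aPhi K J L e = f)
               <-> (aE K I L f /\ exists x, aU K J L x /\ aphi K J L x = pr L f)) /\
  (forall I H J : {set 'I_N}, inIK J -> I \subset J -> H \subset J ->
     forall e, (aE K I J e /\ aE K H J e) <-> aE K (I :&: H) J e) /\
  (forall I J : {set 'I_N}, inIK I -> inIK J -> I \proper J ->
     rel_open (fun y => aE K I J (s J y))
              (fun y => exists x, aU K I J x /\ aphi K I J x = y)).

Definition tame : Prop :=
  (forall I J L : {set 'I_N}, inIK I -> inIK J -> inIK L -> I \subset J -> I \subset L ->
     forall x, (aU K I J x /\ aU K I L x) <->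
               (inIK (J :|: L) /\ aU K I (J :|: L) x)) /\
  (forall I J L : {set 'I_N}, inIK I -> inIK J -> inIK L -> I \subset J -> J \subset L ->
     forall y, (exists x, aU K I L x /\ aphi K I J x = y) <->
               (aU K J L y /\ aE K I J (s J y))).

Definition tame_top_atlas : Prop := top_atlas /\ filtered /\ tame.

(* The virtual neighbourhood |K| (only the equivalence relation is     *)

Definition pt := {I : {set 'I_N} & U I}.

Definition step (p q : pt) : Prop :=
  inIK (projT1 p) /\ inIK (projT1 q) /\ projT1 p \subset projT1 q /\
  aU K (projT1 p) (projT1 q) (projT2 p) /\
  aphi K (projT1 p) (projT1 q) (projT2 p) = projT2 q.

Definition equiv_pt : pt -> pt -> Prop :=
  Relation_Operators.clos_refl_sym_trans pt step.

Definition is_reduction (V : forall I : {set 'I_N}, U I -> Prop) : Prop :=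
  (forall I : {set 'I_N}, inIK I ->
     isOpen (V I) /\ rel_compact (V I) /\
     ((exists x, V I x) -> exists x, V I x /\ Z I x)) /\
  (forall I J : {set 'I_N}, inIK I -> inIK J ->
     (exists x y, closure (V I) x /\ closure (V J) y /\
                  equiv_pt (existT _ I x) (existT _ J y)) ->
     I \subset J \/ J \subset I) /\
  (forall (I : {set 'I_N}) x, inIK I -> Z I x ->
     exists J y, inIK J /\ V J y /\ equiv_pt (existT _ I x) (existT _ J y)).

End AtlasDefs.
Arguments FI {X N} K : rename.
Arguments inIK {X N} K : rename.
Arguments covering_family {X N} K : rename.
Arguments transition_charts {X N} K : rename.
Arguments diag_conventions {X N} K : rename.
Arguments coord_change {X N} K : rename.
Arguments coord_changes {X N} K : rename.
Arguments UIJK {X N} K : rename.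
Arguments weak_cocycle {X N} K : rename.
Arguments cocycle {X N} K : rename.
Arguments top_atlas {X N} K : rename.
Arguments filtered {X N} K : rename.
Arguments tame {X N} K : rename.
Arguments tame_top_atlas {X N} K : rename.
Arguments pt {X N} K : rename.
Arguments step {X N} K : rename.
Arguments equiv_pt {X N} K : rename.
Arguments is_reduction {X N} K : rename.

(* Main.v *)
Require Import Defs.
From Stdlib Require Import Reals List.
From mathcomp Require Import all_boot.
From Stdlib Require Import Classical Lra FunctionalExtensionality PropExtensionality IndefiniteDescription.
From mathcomp Require Import zify.

Set Implicit Arguments.
Unset Strict Implicit.


Section Topo.
Context (T : topSpace).

Lemma open_T : isOpen (fun _ : T => True).
Proof. exact: opn_setT. Qed.

Lemma open_I (A B : T -> Prop) : isOpen A -> isOpen B -> isOpen (fun x => A x /\ B x).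
Proof. exact: opn_I. Qed.

Lemma open_ext (A B : T -> Prop) : (forall x, A x <-> B x) -> isOpen A -> isOpen B.
Proof.
move=> h; have -> : B = A; last by [].
apply: functional_extensionality => x; apply: propositional_extensionality; split; apply h.
Qed.

Lemma open_list (l : list (T -> Prop)) : (forall O, In O l -> isOpen O) ->
  isOpen (fun x => exists O, In O l /\ O x).
Proof. move=> h; exact (@opn_U _ (top T) (fun O => In O l) h). Qed.

Lemma open_empty : isOpen (fun _ : T => False).
Proof.
apply: (open_ext (A := fun x => exists O, In O nil /\ O x)).
  by move=> x; split => [[O [[]]]|[]].
by apply: open_list => O [].
Qed.

Lemma cl_sub (A : T -> Prop) x : A x -> Defs.closure A x.
Proof. move=> Ax O _ Ox; by exists x. Qed.

Lemma cl_mono (A B : T -> Prop) : (forall x, A x -> B x) ->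
  forall x, Defs.closure A x -> Defs.closure B x.
Proof. move=> h x c O oO Ox; case: (c O oO Ox) => y [Oy Ay]; exists y; auto. Qed.

Lemma cl_open_disj (A O : T -> Prop) x : isOpen O -> O x -> (forall y, O y -> ~ A y) ->
  ~ Defs.closure A x.
Proof. move=> oO Ox h c; case: (c O oO Ox) => y [Oy Ay]; exact: (h y Oy Ay). Qed.

Lemma cl_closed (A : T -> Prop) : isOpen (fun x => ~ Defs.closure A x).
Proof.
pose F := fun O : T -> Prop => isOpen O /\ forall y, O y -> ~ A y.
apply: (open_ext (A := fun x => exists O, F O /\ O x)); last first.
  by apply: (@opn_U _ (top T) F) => O [].
move=> x; split.
  by move=> [O [[oO h] Ox]]; apply: (cl_open_disj oO Ox h).
move=> nc; apply: NNPP => hn; apply: nc => O oO Ox.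
apply: NNPP => hne; apply: hn; exists O; split => //; split => // y Oy Ay.
by apply: hne; exists y.
Qed.

Lemma cl_union2 (A B : T -> Prop) x : Defs.closure (fun y => A y \/ B y) x ->
  Defs.closure A x \/ Defs.closure B x.
Proof.
move=> c; apply: NNPP => hn.
have nA : ~ Defs.closure A x by move=> h; apply: hn; left.
have nB : ~ Defs.closure B x by move=> h; apply: hn; right.
have oA := cl_closed A; have oB := cl_closed B.
case: (c _ (open_I oA oB) (conj nA nB)) => y [[ya yb] [Ay|By]].
  by apply: ya; apply: cl_sub.
by apply: yb; apply: cl_sub.
Qed.

Lemma cl_empty x : ~ Defs.closure (fun _ : T => False) x.
Proof. move=> c; by case: (c _ open_T I) => y []. Qed.

Lemma cl_list (l : list (T -> Prop)) x : Defs.closure (fun y => exists O, In O l /\ O y) x ->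
  exists O, In O l /\ Defs.closure O x.
Proof.
elim: l => [|O l IH] c.
  exfalso; apply: (@cl_empty x); apply: (cl_mono _ c) => y [O [[]]].
have c' : Defs.closure (fun y => O y \/ exists O', In O' l /\ O' y) x.
  apply: (cl_mono _ c) => y [O' [[<-|h] h']]; [by left | by right; exists O'].
case: (cl_union2 c') => [h|h].
  by exists O; split => //; left.
by case: (IH h) => O' [h1 h2]; exists O'; split => //; right.
Qed.

Lemma compact_empty : Defs.compact (fun _ : T => False).
Proof. move=> C _ _; exists nil; split => // x []. Qed.

Lemma compact_union (A B : T -> Prop) : Defs.compact A -> Defs.compact B ->
  Defs.compact (fun x => A x \/ B x).
Proof.
move=> cA cB C oC cov.
case: (cA C oC (fun x Ax => cov x (or_introl Ax))) => l1 [h1 h1'].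
case: (cB C oC (fun x Bx => cov x (or_intror Bx))) => l2 [h2 h2'].
exists (l1 ++ l2); split.
  by move=> O hO; case: (in_app_or _ _ _ hO) => ?; auto.
move=> x [Ax|Bx].
  by case: (h1' x Ax) => O [? ?]; exists O; split => //; apply: in_or_app; left.
by case: (h2' x Bx) => O [? ?]; exists O; split => //; apply: in_or_app; right.
Qed.

Lemma compact_ext (A B : T -> Prop) : (forall x, B x -> A x) -> Defs.compact A ->
  isOpen (fun x => ~ B x) -> Defs.compact B.
Proof.
move=> sub cA oB C oC cov.
pose C' := fun O => C O \/ O = (fun x => ~ B x).
have oC' : forall O, C' O -> isOpen O by move=> O [h|->]; auto.
have cov' : forall x, A x -> exists O, C' O /\ O x.
  move=> x Ax; case: (classic (B x)) => Bx.
    by case: (cov x Bx) => O [? ?]; exists O; split => //; left.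
  by exists (fun x => ~ B x); split => //; right.
case: (cA C' oC' cov') => l [hl hl'].
have : exists l0, (forall O, In O l0 -> C O) /\
   forall x, B x -> (exists O, In O l /\ O x) -> exists O, In O l0 /\ O x.
  elim: l hl {hl'} => [|O l IH] hl.
    by exists nil; split => // x _ [O [[]]].
  case: IH => [O' h|l0 [h0 h0']]; first by apply: hl; right.
  case: (hl O (or_introl erefl)) => [CO|eO].
    exists (O :: l0); split.
      by move=> O' [<-|?]; auto.
    move=> x Bx [O' [[<-|i] h]]; first by exists O; split => //; left.
    by case: (h0' x Bx) => [|O'' [? ?]]; [exists O'|exists O''; split => //; right].
  exists l0; split => // x Bx [O' [[<-|i] h]].
    by rewrite eO in h.
  by apply: h0' => //; exists O'.
case=> l0 [h0 h0']; exists l0; split => // x Bx.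
by apply: h0' => //; apply: hl'; apply: sub.
Qed.

End Topo.


Section Metric.
Local Open Scope R_scope.
Context (T : topSpace) (hm : metrizable T).



Lemma mball_open (d : T -> T -> R) (md : is_metric d) x r :
  metric_open d (fun y => (d x y < r)).
Proof.
case: md => [d0 [dE [dS dT]]] y hy; exists (r - d x y); split; first lra.
move=> z hz; have := dT x y z; lra.
Qed.

Lemma mfar_open (d : T -> T -> R) (md : is_metric d) x r :
  metric_open d (fun y => (r < d x y)).
Proof.
case: md => [d0 [dE [dS dT]]] y hy; exists (d x y - r); split; first lra.
move=> z hz; have := dT x z y; rewrite (dS z y); lra.
Qed.

Lemma regular (O : T -> Prop) x : isOpen O -> O x ->
  exists N, isOpen N /\ N x /\ forall y, Defs.closure N y -> O y.
Proof.
case: hm => d [md hd] oO Ox.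
have md' := md; case: md' => [d0 [dE [dS dT]]].
case: ((proj1 (hd O) oO) x Ox) => e [e0 he].
exists (fun y => (d x y < e / 2)); split; first by apply/hd; apply: mball_open.
split; first by have := proj2 (dE x x) erefl; lra.
move=> y c; apply: he; apply: NNPP => hn.
apply: (cl_open_disj (O := fun y => (e / 2 < d x y)) _ _ _ c).
- by apply/hd; apply: mfar_open.
- lra.
- move=> z; lra.
Qed.

Lemma hausdorff (x y : T) : x <> y ->
  exists O O', isOpen O /\ isOpen O' /\ O x /\ O' y /\ forall z, O z -> O' z -> False.
Proof.
case: hm => d [md hd] nxy.
have md' := md; case: md' => [d0 [dE [dS dT]]].
have pos : (0 < d x y).
  have := d0 x y; case/Rle_lt_or_eq_dec => // h; exfalso; apply: nxy; apply/dE; symmetry; exact h.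
exists (fun z => (d x z < d x y / 2)), (fun z => (d y z < d x y / 2)).
split; first by apply/hd; apply: mball_open.
split; first by apply/hd; apply: mball_open.
split; first by have := proj2 (dE x x) erefl; lra.
split; first by have := proj2 (dE y y) erefl; lra.
move=> z h1 h2; have := dT x z y; rewrite (dS z y); lra.
Qed.

Lemma compact_closed (K : T -> Prop) : Defs.compact K -> isOpen (fun x => ~ K x).
Proof.
case: hm => d [md hd] cK; apply/hd.
have md' := md; case: md' => [d0 [dE [dS dT]]].
move=> x nKx.
pose C := fun O : T -> Prop => exists r, (0 < r) /\ O = (fun y => (r < d x y)).
have oC : forall O, C O -> isOpen O by move=> O [r [_ ->]]; apply/hd; apply: mfar_open.
have cov : forall y, K y -> exists O, C O /\ O y.
  move=> y Ky; have pos : (0 < d x y).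
    have := d0 x y; case/Rle_lt_or_eq_dec => // h; exfalso.
    have exy : x = y by apply/dE; symmetry; exact h.
    by apply: nKx; rewrite exy.
  exists (fun z => (d x y / 2 < d x z)); split; last lra.
  by exists (d x y / 2); split => //; lra.
case: (cK C oC cov) => l [hl hl'].
have : exists e, (0 < e) /\ forall O, In O l -> forall z, O z -> (e < d x z).
  elim: l hl {hl'} => [|O l IH] hl.
    by exists 1; split => [|O []]; lra.
  case: IH => [O' h|e [e0 he]]; first by apply: hl; right.
  case: (hl O (or_introl erefl)) => r [r0 ->].
  exists (Rmin e r); split; first by apply: Rmin_glb_lt.
  move=> O' [<-|i] z h.
    by have := Rmin_r e r; lra.
  by have := he O' i z h; have := Rmin_l e r; lra.
case=> e [e0 he]; exists e; split => // z hz Kz.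
case: (hl' z Kz) => O [i Oz]; have := he O i z Oz; lra.
Qed.

Lemma compact_closure_sub (K A : T -> Prop) : Defs.compact K ->
  (forall x, A x -> K x) -> forall x, Defs.closure A x -> K x.
Proof.
move=> cK sub x c; apply: NNPP => nK.
apply: (cl_open_disj (compact_closed cK) nK _ c) => y ny Ay; apply: ny; auto.
Qed.

Lemma compact_eq (A B : T -> Prop) : (forall x, A x <-> B x) -> Defs.compact A -> Defs.compact B.
Proof.
move=> h; have -> : B = A; last by [].
apply: functional_extensionality => x; apply: propositional_extensionality; split; apply h.
Qed.

Lemma compact_list (l : list (T -> Prop)) : (forall K, In K l -> Defs.compact K) ->
  Defs.compact (fun x => exists K, In K l /\ K x).
Proof.
elim: l => [|K l IH] h.
  apply: (compact_ext (A := fun _ => False)) => //; first by move=> x [K [[]]].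
  - exact: compact_empty.
  - apply: (open_ext (A := fun _ => True)) => //; [split => // _ [K [[]]] | exact: open_T].
have cu := compact_union (h K (or_introl erefl)) (IH (fun K' i => h K' (or_intror i))).
apply: (compact_eq _ cu) => x; split.
  by move=> [Kx|[K' [i Kx]]]; [exists K; split => //; left | exists K'; split => //; right].
by move=> [K' [[<-|i] Kx]]; [left | right; exists K'].
Qed.

Lemma precompact_nbhd (A : T -> Prop) : locally_compact T -> Defs.compact A ->
  exists P, isOpen P /\ (forall x, A x -> P x) /\ Defs.compact (Defs.closure P).
Proof.
move=> lc cA.
pose C := fun O : T -> Prop => isOpen O /\ exists K, Defs.compact K /\ forall y, O y -> K y.
have oC : forall O, C O -> isOpen O by move=> O [].
have cov : forall x, A x -> exists O, C O /\ O x.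
  move=> x _; case: (lc x) => O [K [oO [Ox [sub cK]]]].
  by exists O; split => //; split => //; exists K.
case: (cA C oC cov) => l [hl hl'].
have : exists lK, (forall K, In K lK -> Defs.compact K) /\
    forall O, In O l -> forall y, O y -> exists K, In K lK /\ K y.
  elim: l hl {hl'} => [|O l IH] hl.
    by exists nil; split => // O [].
  case: IH => [O' i|lK [h1 h2]]; first by apply: hl; right.
  case: (hl O (or_introl erefl)) => _ [K [cK sub]].
  exists (K :: lK); split; first by move=> K' [<-|i]; auto.
  move=> O' [<-|i] y Oy; first by exists K; split => //; [left | apply: sub].
  by case: (h2 O' i y Oy) => K' [? ?]; exists K'; split => //; right.
case=> lK [h1 h2].
exists (fun x => exists O, In O l /\ O x); split; first by apply: open_list => O /hl [].
split; first by move=> x Ax; apply: hl'.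
have cU := compact_list h1.
apply: (compact_ext (A := fun x => exists K, In K lK /\ K x)) => //; last exact: cl_closed.
apply: compact_closure_sub => // y [O [i Oy]]; exact: h2 O i y Oy.
Qed.

End Metric.


Lemma tube1 (S T : topSpace) (bad : S -> T -> Prop) (B : T -> Prop) (a : S) :
  Defs.compact B ->
  (forall b, B b -> exists Na Nb, isOpen Na /\ isOpen Nb /\ Na a /\ Nb b /\
      forall x y, Defs.closure Na x -> Defs.closure Nb y -> ~ bad x y) ->
  exists Na W', isOpen Na /\ isOpen W' /\ Na a /\ (forall y, B y -> W' y) /\
      forall x y, Defs.closure Na x -> Defs.closure W' y -> ~ bad x y.
Proof.
move=> cB h.
pose C := fun Nb : T -> Prop => isOpen Nb /\ exists Na, isOpen Na /\ Na a /\
   forall x y, Defs.closure Na x -> Defs.closure Nb y -> ~ bad x y.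
have oC : forall O, C O -> isOpen O by move=> O [].
have cov : forall b, B b -> exists O, C O /\ O b.
  move=> b Bb; case: (h b Bb) => Na [Nb [oa [ob [Na_a [Nb_b hh]]]]].
  by exists Nb; split => //; split => //; exists Na.
case: (cB C oC cov) => l [hl hl'].
have : exists Na, isOpen Na /\ Na a /\ forall Nb, In Nb l ->
     forall x y, Defs.closure Na x -> Defs.closure Nb y -> ~ bad x y.
  elim: l hl {hl'} => [|Nb l IH] hl.
    by exists (fun _ => True); split; [exact: open_T | split => // Nb []].
  case: IH => [O i|Na [oa [Naa hNa]]]; first by apply: hl; right.
  case: (hl Nb (or_introl erefl)) => _ [Na' [oa' [Naa' hNa']]].
  exists (fun x => Na x /\ Na' x); split; first exact: open_I.
  split => // Nb' [<-|i] x y cx cy.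
    by apply: hNa' cy; apply: (cl_mono _ cx) => z [].
  by apply: (hNa Nb' i) cy; apply: (cl_mono _ cx) => z [].
case=> Na [oa [Naa hNa]].
exists Na, (fun y => exists O, In O l /\ O y); split => //.
split; first by apply: open_list => O /hl [].
split => //; split; first by move=> y By; apply: hl'.
move=> x y cx cy; case: (cl_list cy) => Nb [i cNb]; exact: hNa Nb i x y cx cNb.
Qed.

Lemma tube (S T : topSpace) (bad : S -> T -> Prop) (A : S -> Prop) (B : T -> Prop) :
  Defs.compact A -> Defs.compact B ->
  (forall a b, A a -> B b -> exists Na Nb, isOpen Na /\ isOpen Nb /\ Na a /\ Nb b /\
      forall x y, Defs.closure Na x -> Defs.closure Nb y -> ~ bad x y) ->
  exists W W', isOpen W /\ isOpen W' /\ (forall x, A x -> W x) /\ (forall y, B y -> W' y) /\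
      forall x y, Defs.closure W x -> Defs.closure W' y -> ~ bad x y.
Proof.
move=> cA cB h.
pose C := fun Na : S -> Prop => isOpen Na /\ exists W', isOpen W' /\ (forall y, B y -> W' y) /\
   forall x y, Defs.closure Na x -> Defs.closure W' y -> ~ bad x y.
have oC : forall O, C O -> isOpen O by move=> O [].
have cov : forall a, A a -> exists O, C O /\ O a.
  move=> a Aa; case: (tube1 cB (h a ^~ Aa)) => Na [W' [oa [oW [Naa [BW hh]]]]].
  by exists Na; split => //; split => //; exists W'.
case: (cA C oC cov) => l [hl hl'].
have : exists W', isOpen W' /\ (forall y, B y -> W' y) /\ forall Na, In Na l ->
     forall x y, Defs.closure Na x -> Defs.closure W' y -> ~ bad x y.
  elim: l hl {hl'} => [|Na l IH] hl.
    by exists (fun _ => True); split; [exact: open_T | split => // Nb []].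
  case: IH => [O i|W [oW [BW hW]]]; first by apply: hl; right.
  case: (hl Na (or_introl erefl)) => _ [W' [oW' [BW' hW']]].
  exists (fun x => W x /\ W' x); split; first exact: open_I.
  split; first by move=> y By; split; auto.
  move=> Na' [<-|i] x y cx cy.
    by apply: hW' cx _; apply: (cl_mono _ cy) => z [].
  by apply: (hW Na' i) cx _; apply: (cl_mono _ cy) => z [].
case=> W' [oW' [BW' hW']].
exists (fun x => exists O, In O l /\ O x), W'; split; first by apply: open_list => O /hl [].
split => //; split; first by move=> x Ax; apply: hl'.
split => // x y cx cy; case: (cl_list cx) => Na [i cNa]; exact: hW' Na i x y cNa cy.
Qed.


Section Atlas.
Context (X : topSpace) (N : nat) (K : atlas_data X N) (hK : tame_top_atlas K).

Local Notation U I := (cU (ch K I)).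
Local Notation pr I := (cpr (ch K I)).
Local Notation z0 I := (czero (ch K I)).
Local Notation s I := (cs (ch K I)).
Local Notation psi I := (cpsi (ch K I)).
Local Notation Z I := (zset (ch K I)).
Local Notation uU := (aU K).
Local Notation ph := (aphi K).
Local Notation Ph := (aPhi K).
Local Notation IK := (inIK K).
Implicit Types I J L H : {set 'I_N}.

Lemma hcov : covering_family K. Proof. by case: hK => [[? _] _]. Qed.
Lemma htr : transition_charts K. Proof. by case: hK => [[_ [? _]] _]. Qed.
Lemma hdiag : diag_conventions K. Proof. by case: hK => [[_ [_ [? _]]] _]. Qed.
Lemma hcc : coord_changes K. Proof. by case: hK => [[_ [_ [_ [? _]]]] _]. Qed.
Lemma hcoc : cocycle K. Proof. by case: hK => [[_ [_ [_ [_ ?]]]] _]. Qed.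
Lemma hfilt : filtered K. Proof. by case: hK => [_ [? _]]. Qed.
Lemma htame : tame K. Proof. by case: hK => [_ [_ ?]]. Qed.

Lemma IK_ne I : IK I -> I != set0. Proof. by case. Qed.

Lemma IK_sub I J : IK J -> I \subset J -> I != set0 -> IK I.
Proof.
move=> [_ [x Fx]] sIJ ne; split => //; exists x => i iI; apply: Fx; exact: (subsetP sIJ).
Qed.

Lemma chartI I : IK I -> is_chart (ch K I). Proof. by move=> h; case: (htr h). Qed.
Lemma FIeq I : IK I -> forall x, cF (ch K I) x <-> FI K I x. Proof. by move=> h; case: (htr h). Qed.
Lemma diagU I x : IK I -> uU I I x. Proof. by move=> h; case: (hdiag h) => h1 _; apply: h1. Qed.
Lemma diagphi I x : IK I -> ph I I x = x. Proof. by move=> h; case: (hdiag h) => _ h1; apply: h1. Qed.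

Lemma sub_eq_proper (I J : {set 'I_N}) : I \subset J -> I = J \/ I \proper J.
Proof.
move=> h; case: (eqVneq I J) => [->|ne]; [by left | right; by rewrite properEneq ne h].
Qed.

Lemma metr I : IK I -> metrizable (cU (ch K I)).
Proof. by move=> h; case: (chartI h) => _ [[_ [_ ?]] _]. Qed.
Lemma lcomp I : IK I -> locally_compact (cU (ch K I)).
Proof. by move=> h; case: (chartI h) => _ [[_ [? _]] _]. Qed.
Lemma prz I x : IK I -> pr I (z0 I x) = x.
Proof. by move=> h; case: (chartI h) => _ [_ [_ [_ [_ [? _]]]]]. Qed.
Lemma prs I x : IK I -> pr I (s I x) = x.
Proof. by move=> h; case: (chartI h) => _ [_ [_ [_ [_ [_ [_ [? _]]]]]]]. Qed.
Lemma scont I : IK I -> continuous (cs (ch K I)).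
Proof. by move=> h; case: (chartI h) => _ [_ [_ [_ [_ [_ [? _]]]]]]. Qed.
Lemma psihomeo I : IK I -> homeo_onto (zset (ch K I)) (cF (ch K I)) (cpsi (ch K I)).
Proof. by move=> h; case: (chartI h) => _ [_ [_ [_ [_ [_ [_ [_ ?]]]]]]]. Qed.

Lemma aU_down I J L x : IK I -> IK J -> IK L -> I \subset J -> J \subset L ->
  uU I L x -> uU I J x.
Proof.
move=> hI hJ hL sIJ sJL hx.
have h := (proj1 htame) I J L hI hJ hL sIJ (subset_trans sIJ sJL) x.
have e : J :|: L = L by apply/setUidPr.
rewrite e in h; by case: (proj2 h (conj hL hx)).
Qed.

Lemma aU_phi I J L x : IK I -> IK J -> IK L -> I \subset J -> J \subset L ->
  uU I L x -> uU J L (ph I J x).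
Proof.
move=> hI hJ hL sIJ sJL hx.
have h := (proj2 htame) I J L hI hJ hL sIJ sJL (ph I J x).
by case: (proj1 h (ex_intro _ x (conj hx erefl))).
Qed.

Lemma phi_coc I J L x : IK I -> IK J -> IK L -> I \subset J -> J \subset L ->
  uU I J x -> uU J L (ph I J x) -> uU I L x /\ ph I L x = ph J L (ph I J x).
Proof.
move=> hI hJ hL sIJ sJL h1 h2.
case: (sub_eq_proper sIJ) => [eIJ|pIJ].
  subst J; by rewrite diagphi in h2 *.
case: (sub_eq_proper sJL) => [eJL|pJL].
  subst L; by rewrite diagphi.
have hu : UIJK K I J L x by split.
have hIL : uU I L x := (proj2 hcoc) I J L hI hJ hL pIJ pJL x hu.
split => //.
have hu' : UIJK K I J L (pr I (z0 I x)) by rewrite prz.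
have hIL' : uU I L (pr I (z0 I x)) by rewrite prz.
have e := (proj1 hcoc) I J L hI hJ hL pIJ pJL (z0 I x) hu' hIL'.
case: (hcc hI hJ pIJ) => _ [_ [_ [_ [cIJ _]]]].
case: (hcc hJ hL pJL) => _ [_ [_ [_ [cJL _]]]].
case: (hcc hI hL (proper_sub_trans pIJ (proper_sub pJL) : I \proper L)) => _ [_ [_ [_ [cIL _]]]].
have := cIL _ hIL'; rewrite prz // -e => <-.
have e2 := cIJ _ hu'.1; rewrite prz // in e2.
rewrite cJL; last by rewrite e2.
by rewrite e2.
Qed.

Lemma phi_inj I J x y : IK I -> IK J -> I \subset J -> uU I J x -> uU I J y ->
  ph I J x = ph I J y -> x = y.
Proof.
move=> hI hJ sIJ hx hy e; case: (sub_eq_proper sIJ) => [eIJ|pIJ].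
  subst J; by rewrite !diagphi in e.
case: (hcc hI hJ pIJ) => _ [_ [_ [[_ [inj _]] _]]]; exact: inj.
Qed.

Lemma zero_fwd I J x : IK I -> IK J -> I \subset J -> uU I J x -> Z I x ->
  Z J (ph I J x) /\ psi J (ph I J x) = psi I x.
Proof.
move=> hI hJ sIJ hx zx; case: (sub_eq_proper sIJ) => [eIJ|pIJ].
  subst J; by rewrite !diagphi.
case: (hcc hI hJ pIJ) => _ [_ [_ [_ [_ [_ [_ h]]]]]]; exact: h.
Qed.

Lemma zero_back I J x : IK I -> IK J -> I \subset J -> uU I J x -> Z J (ph I J x) -> Z I x.
Proof.
move=> hI hJ sIJ hx zx; case: (sub_eq_proper sIJ) => [eIJ|pIJ].
  subst J; by rewrite !diagphi in zx.
case: (hcc hI hJ pIJ) => _ [_ [[_ [inj _]] [_ [_ [c0 [cs _]]]]]].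
apply: inj; rewrite ?prz ?prs //.
move: zx; rewrite /zset (c0 _ hx) (cs _ hx) => ->.
done.
Qed.

Lemma zero_in I J x : IK I -> IK J -> I \subset J -> Z I x -> cF (ch K J) (psi I x) -> uU I J x.
Proof.
move=> hI hJ sIJ zx hF; case: (sub_eq_proper sIJ) => [eIJ|pIJ].
  subst J; exact: diagU.
case: (hcc hI hJ pIJ) => _ [h _].
have hFI : cF (ch K I) (psi I x) by case: (psihomeo hI) => _ onto; apply/onto; exists x.
by case: (proj2 (h x) (conj zx (conj hFI hF))).
Qed.

End Atlas.


Ltac ssub := apply/subsetP => ?; rewrite !inE => /=;
  let h := fresh in move=> h; repeat (case/orP: h => h); rewrite ?h ?orbT //.

Section Rel.
Context (X : topSpace) (N : nat) (K : atlas_data X N) (hK : tame_top_atlas K).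

Local Notation U I := (cU (ch K I)).
Local Notation pr I := (cpr (ch K I)).
Local Notation z0 I := (czero (ch K I)).
Local Notation s I := (cs (ch K I)).
Local Notation psi I := (cpsi (ch K I)).
Local Notation Z I := (zset (ch K I)).
Local Notation uU := (aU K).
Local Notation ph := (aphi K).
Local Notation IK := (inIK K).
Implicit Types I J L H : {set 'I_N}.

Definition Rr I (x : U I) J (y : U J) : Prop :=
  IK I /\ IK J /\ IK (I :|: J) /\ uU I (I :|: J) x /\ uU J (I :|: J) y /\
  ph I (I :|: J) x = ph J (I :|: J) y.
Arguments Rr : clear implicits.

Lemma Rr_sym I (x : U I) J (y : U J) : Rr I x J y -> Rr J y I x.
Proof. by rewrite /Rr setUC; case=> [? [? [? [? [? ?]]]]]; do 5 (split => //). Qed.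

Lemma Rr_refl I (x : U I) : IK I -> Rr I x I x.
Proof. move=> h; rewrite /Rr setUid; do 3 (split => //); split; first exact: (diagU hK). by split => //; exact: (diagU hK). Qed.

Lemma Rr_trans I (x : U I) J (y : U J) L (z : U L) : Rr I x J y -> Rr J y L z -> Rr I x L z.
Proof.
move=> [hI [hJ [hA [a1 [a2 e1]]]]] [_ [hL [hB [b1 [b2 e2]]]]].
set A := I :|: J in hA a1 a2 e1; set B := J :|: L in hB b1 b2 e2.
have t := (proj1 (htame hK)) J A B hJ hA hB (subsetUr _ _) (subsetUl _ _) y.
case: (proj1 t (conj a2 b1)) => hM yM.
set M := A :|: B in hM yM t.
have sAM : A \subset M by apply: subsetUl.
have sBM : B \subset M by apply: subsetUr.
have sJA : J \subset A by apply: subsetUr.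
have sJB : J \subset B by apply: subsetUl.
have aM := aU_phi hK hJ hA hM sJA sAM yM.
have [_ ey] := phi_coc hK hJ hA hM sJA sAM a2 aM.
have [xM ex] := phi_coc hK hI hA hM (subsetUl _ _) sAM a1 (eq_ind_r _ aM e1).
rewrite e1 -ey in ex.
have bM := aU_phi hK hJ hB hM sJB sBM yM.
have [_ ey'] := phi_coc hK hJ hB hM sJB sBM b1 bM.
have [zM ez] := phi_coc hK hL hB hM (subsetUr _ _) sBM b2 (eq_ind _ (fun w => uU B M w) bM _ e2).
rewrite -e2 -ey' in ez.
have sIL : I :|: L \subset M by rewrite /M /A /B; ssub.
have hIL : IK (I :|: L).
  apply: (IK_sub hM sIL); apply/set0Pn; case/set0Pn: (IK_ne hI) => i iI.
  by exists i; rewrite inE iI.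
have xIL := aU_down hK hI hIL hM (subsetUl _ _) sIL xM.
have zIL := aU_down hK hL hIL hM (subsetUr _ _) sIL zM.
do 5 (split => //).
have xx := aU_phi hK hI hIL hM (subsetUl _ _) sIL xM.
have zz := aU_phi hK hL hIL hM (subsetUr _ _) sIL zM.
have [_ ex'] := phi_coc hK hI hIL hM (subsetUl _ _) sIL xIL xx.
have [_ ez'] := phi_coc hK hL hIL hM (subsetUr _ _) sIL zIL zz.
apply: (phi_inj hK hIL hM sIL xx zz).
by rewrite -ex' -ez' ex ez.
Qed.

Lemma step_Rr p q : step K p q -> Rr (projT1 p) (projT2 p) (projT1 q) (projT2 q).
Proof.
case: p q => [I x] [J y] /= [hI [hJ [sIJ [hx e]]]].
have e' : I :|: J = J by apply/setUidPr.
rewrite /Rr e'; do 5 (split => //); first exact: (diagU hK).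
by rewrite (diagphi hK).
Qed.

Lemma equiv_Rr p q : equiv_pt K p q -> IK (projT1 p) \/ IK (projT1 q) ->
  Rr (projT1 p) (projT2 p) (projT1 q) (projT2 q).
Proof.
elim=> {p q} [p q st|p|p q _ IH|p q r _ IH1 _ IH2] h.
- exact: step_Rr.
- by case: h => h; apply: Rr_refl.
- by apply: Rr_sym; apply: IH; case: h; auto.
- case: h => h.
    have h1 := IH1 (or_introl h); case: h1 => [_ [hq _]] .
    by apply: (Rr_trans (IH1 (or_introl h))); apply: IH2; left.
  have h2 := IH2 (or_intror h); case: (h2) => [hq _].
  by apply: (Rr_trans _ h2); apply: IH1; right.
Qed.

End Rel.
Arguments Rr {X N K} I x J y.


Section Sep.
Context (X : topSpace) (N : nat) (K : atlas_data X N) (hK : tame_top_atlas K).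

Local Notation U I := (cU (ch K I)).
Local Notation pr I := (cpr (ch K I)).
Local Notation z0 I := (czero (ch K I)).
Local Notation s I := (cs (ch K I)).
Local Notation psi I := (cpsi (ch K I)).
Local Notation Z I := (zset (ch K I)).
Local Notation uU := (aU K).
Local Notation ph := (aphi K).
Local Notation IK := (inIK K).
Implicit Types I J L H : {set 'I_N}.

Lemma psi_inj I (x y : U I) : IK I -> Z I x -> Z I y -> psi I x = psi I y -> x = y.
Proof. move=> h; case: (psihomeo hK h) => [[_ [inj _]] _]; exact: inj. Qed.

Lemma psi_F I (x : U I) : IK I -> Z I x -> cF (ch K I) (psi I x).
Proof. move=> h zx; case: (psihomeo hK h) => _ onto; apply/onto; by exists x. Qed.

Lemma IK_union I J : IK I -> IK J -> (exists p, FI K I p /\ FI K J p) -> IK (I :|: J).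
Proof.
move=> hI hJ [p [p1 p2]]; split.
  apply/set0Pn; case/set0Pn: (IK_ne hI) => i iI; by exists i; rewrite inE iI.
exists p => i; rewrite inE; case/orP; auto.
Qed.

Lemma zero_equiv I J (x : U I) (y : U J) : IK I -> IK J -> Z I x -> Z J y ->
  psi I x = psi J y -> equiv_pt K (existT _ I x) (existT _ J y).
Proof.
move=> hI hJ zx zy e.
have FIp : FI K I (psi I x) by apply/(FIeq hK hI); apply: psi_F.
have FJp : FI K J (psi I x) by rewrite e; apply/(FIeq hK hJ); apply: psi_F.
have hL := IK_union hI hJ (ex_intro _ _ (conj FIp FJp)).
have FL : cF (ch K (I :|: J)) (psi I x).
  apply/(FIeq hK hL) => i; rewrite inE; case/orP; auto.
have xL := zero_in hK hI hL (subsetUl _ _) zx FL.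
have yL : uU J (I :|: J) y by apply: (zero_in hK hJ hL (subsetUr _ _) zy); rewrite -e.
have [zw ew] := zero_fwd hK hI hL (subsetUl _ _) xL zx.
have [zw' ew'] := zero_fwd hK hJ hL (subsetUr _ _) yL zy.
have eq : ph I (I :|: J) x = ph J (I :|: J) y.
  by apply: (psi_inj hL zw zw'); rewrite ew ew'.
apply: (@Relation_Operators.rst_trans _ _ _ (existT _ (I :|: J) (ph I (I :|: J) x))).
  apply: Relation_Operators.rst_step; do 2 (split => //); split; [exact: subsetUl | by split].
apply: Relation_Operators.rst_sym; apply: Relation_Operators.rst_step; do 2 (split => //); split; first exact: subsetUr.
by split.
Qed.

Lemma E_of_Rr I J (x : U I) (y : U J) : Rr I x J y ->
  aE K (I :&: J) (I :|: J) (s (I :|: J) (ph I (I :|: J) x)).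
Proof.
move=> [hI [hJ [hL [xL [yL e]]]]].
have t1 := (proj2 (htame hK)) I (I :|: J) (I :|: J) hI hL hL (subsetUl _ _) (subxx _)
             (ph I (I :|: J) x).
have t2 := (proj2 (htame hK)) J (I :|: J) (I :|: J) hJ hL hL (subsetUr _ _) (subxx _)
             (ph I (I :|: J) x).
case: (proj1 t1 (ex_intro _ x (conj xL erefl))) => _ E1.
case: (proj1 t2 (ex_intro _ y (conj yL (esym e)))) => _ E2.
case: (hfilt hK) => _ [_ [_ [f3 _]]].
exact: (proj1 (f3 I J (I :|: J) hL (subsetUl _ _) (subsetUr _ _) _) (conj E1 E2)).
Qed.

Lemma Rr_empty I J (x : U I) (y : U J) : Rr I x J y -> I :&: J = set0 ->
  Z I x /\ Z J y /\ psi I x = psi J y.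
Proof.
move=> hR e0; have hE := E_of_Rr hR; rewrite e0 in hE.
case: hR => [hI [hJ [hL [xL [yL e]]]]].
case: (hfilt hK) => _ [f1 _].
case: (proj1 (proj2 (f1 _ hL) _) hE) => u hu.
set w := ph I (I :|: J) x in hu e.
have uw : u = w by rewrite -(prz hK u hL) hu (prs hK w hL).
have zw : Z (I :|: J) w by rewrite /zset -hu uw.
have zx := zero_back hK hI hL (subsetUl _ _) xL zw.
have zy : Z J y by apply: (zero_back hK hJ hL (subsetUr _ _) yL); rewrite -e.
split => //; split => //.
have [_ e1] := zero_fwd hK hI hL (subsetUl _ _) xL zx.
have [_ e2] := zero_fwd hK hJ hL (subsetUr _ _) yL zy.
by rewrite -e1 -e2; f_equal; exact: e.
Qed.

Lemma Rr_H I J (x : U I) (y : U J) : Rr I x J y -> I :&: J != set0 ->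
  exists v, uU (I :&: J) I v /\ uU (I :&: J) J v /\ ph (I :&: J) I v = x /\ ph (I :&: J) J v = y.
Proof.
move=> hR ne; have hE := E_of_Rr hR.
case: hR => [hI [hJ [hL [xL [yL e]]]]].
set H := I :&: J in hE ne *; set L := I :|: J in hE hL xL yL e.
have sHI : H \subset I by apply: subsetIl.
have sHJ : H \subset J by apply: subsetIr.
have sIL : I \subset L by apply: subsetUl.
have sJL : J \subset L by apply: subsetUr.
have hH : IK H := IK_sub hL (subset_trans sHI sIL) ne.
have t := (proj2 (htame hK)) H L L hH hL hL (subset_trans sHI sIL) (subxx _) (ph I L x).
case: (proj2 t (conj (diagU hK _ hL) hE)) => v [vL ev].
have vI := aU_down hK hH hI hL sHI sIL vL.
have vJ := aU_down hK hH hJ hL sHJ sJL vL.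
have pI := aU_phi hK hH hI hL sHI sIL vL.
have pJ := aU_phi hK hH hJ hL sHJ sJL vL.
have [_ c1] := phi_coc hK hH hI hL sHI sIL vI pI.
have [_ c2] := phi_coc hK hH hJ hL sHJ sJL vJ pJ.
exists v; split => //; split => //; split.
  by apply: (phi_inj hK hI hL sIL pI xL); rewrite -c1 ev.
by apply: (phi_inj hK hJ hL sJL pJ yL); rewrite -c2 ev e.
Qed.

Lemma img_closed H I : IK H -> IK I -> H \subset I ->
  isOpen (fun x : U I => ~ exists v, uU H I v /\ ph H I v = x).
Proof.
move=> hH hI sHI.
case: (hfilt hK) => f0 _.
have cE := f0 H I hI sHI.
have o := scont hK hI cE.
apply: (open_ext _ o) => x /=; split => h.
  move=> [v [vI ev]]; apply: h.
  have t := (proj2 (htame hK)) H I I hH hI hI sHI (subxx _) x.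
  by case: (proj1 t (ex_intro _ v (conj vI ev))).
move=> hE; apply: h.
have t := (proj2 (htame hK)) H I I hH hI hI sHI (subxx _) x.
case: (proj2 t (conj (diagU hK _ hI) hE)) => v [vI ev].
by exists v; split => //; rewrite -(diagphi hK v hI) ev.
Qed.

End Sep.


Section Sep2.
Context (X : topSpace) (N : nat) (K : atlas_data X N) (hK : tame_top_atlas K)
  (hX : metrizable X).

Local Notation U I := (cU (ch K I)).
Local Notation psi I := (cpsi (ch K I)).
Local Notation Z I := (zset (ch K I)).
Local Notation uU := (aU K).
Local Notation ph := (aphi K).
Local Notation IK := (inIK K).
Implicit Types I J L H : {set 'I_N}.

Lemma trivial_sep I J (a : U I) (b : U J) (P : U I -> U J -> Prop) :
  (forall x y, ~ P x y) ->
  exists Na Nb, isOpen Na /\ isOpen Nb /\ Na a /\ Nb b /\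
      forall x y, Defs.closure Na x -> Defs.closure Nb y -> ~ P x y.
Proof.
move=> h; exists (fun _ => True), (fun _ => True); do 2 (split; first exact: open_T).
by do 2 (split => //); move=> x y _ _; apply: h.
Qed.

Lemma sep_pt I J (a : U I) (b : U J) : IK I -> IK J -> ~~ (I \subset J) -> ~~ (J \subset I) ->
  Z I a -> Z J b -> psi I a <> psi J b ->
  exists Na Nb, isOpen Na /\ isOpen Nb /\ Na a /\ Nb b /\
      forall x y, Defs.closure Na x -> Defs.closure Nb y -> ~ Rr I x J y.
Proof.
move=> hI hJ nIJ nJI za zb nab.
case: (classic (IK (I :|: J))) => hL; last first.
  by apply: trivial_sep => x y [_ [_ [h _]]].
case: (eqVneq (I :&: J) set0) => e0.
  case: (hausdorff hX nab) => D [D' [oD [oD' [Da [Db disj]]]]].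
  case: (psihomeo hK hI) => [[cI _] _]; case: (cI D oD) => O1 [oO1 hO1].
  case: (psihomeo hK hJ) => [[cJ _] _]; case: (cJ D' oD') => O2 [oO2 hO2].
  case: (regular (metr hK hI) oO1 (proj1 (hO1 a za) Da)) => Na [oNa [Naa sNa]].
  case: (regular (metr hK hJ) oO2 (proj1 (hO2 b zb) Db)) => Nb [oNb [Nbb sNb]].
  exists Na, Nb; split => //; split => //; split => //; split => // x y cx cy hR.
  case: (Rr_empty hK hR e0) => zx [zy exy].
  apply: (disj (psi I x)); first by apply/(hO1 x zx); apply: sNa.
  by rewrite exy; apply/(hO2 y zy); apply: sNb.
set H := I :&: J in e0 *.
have sHI : H \subset I by apply: subsetIl.
have sHJ : H \subset J by apply: subsetIr.
have hH : IK H := IK_sub hL (subset_trans sHI (subsetUl _ _)) e0.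
have pHI : H \proper I.
  rewrite properEneq sHI andbT; apply/eqP => e; move: nIJ; by rewrite -e subsetIr.
have pHJ : H \proper J.
  rewrite properEneq sHJ andbT; apply/eqP => e; move: nJI; by rewrite -e subsetIl.
case: (classic (exists u, uU H I u /\ ph H I u = a)) => [[u [uI ua]]|na]; last first.
  case: (regular (metr hK hI) (img_closed hK hH hI sHI) na) => Na [oNa [Naa sNa]].
  exists Na, (fun _ => True); do 2 (split => //); first exact: open_T.
  split => //; split => // x y cx _ hR.
  case: (Rr_H hK hR e0) => v [vI [_ [ex _]]].
  by apply: (sNa x cx); exists v.
case: (classic (exists u, uU H J u /\ ph H J u = b)) => [[u' [uJ ub]]|nb]; last first.
  case: (regular (metr hK hJ) (img_closed hK hH hJ sHJ) nb) => Nb [oNb [Nbb sNb]].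
  exists (fun _ => True), Nb; split; first exact: open_T.
  split => //; split => //; split => // x y _ cy hR.
  case: (Rr_H hK hR e0) => v [_ [vJ [_ ey]]].
  by apply: (sNb y cy); exists v.
case: (classic (u = u')) => [euu|neu].
  subst u'; exfalso; apply: nab.
  have zu : Z H u by apply: (zero_back hK hH hI sHI uI); rewrite ua.
  have [_ e1] := zero_fwd hK hH hI sHI uI zu.
  have [_ e2] := zero_fwd hK hH hJ sHJ uJ zu.
  by rewrite -ua -ub e1 e2.
case: (hausdorff (metr hK hH) neu) => O [O' [oO [oO' [Ou [Ou' disj]]]]].
case: (hcc hK hH hI pHI) => _ [_ [_ [[_ [injI omI]] _]]].
case: (hcc hK hH hJ pHJ) => _ [_ [_ [[_ [injJ omJ]] _]]].
case: (omI O oO) => P [oP hP].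
case: (omJ O' oO') => P' [oP' hP'].
have Pa : P a by apply/(hP a); [exists u | exists u].
have Pb : P' b by apply/(hP' b); [exists u' | exists u'].
case: (regular (metr hK hI) oP Pa) => Na [oNa [Naa sNa]].
case: (regular (metr hK hJ) oP' Pb) => Nb [oNb [Nbb sNb]].
exists Na, Nb; split => //; split => //; split => //; split => // x y cx cy hR.
case: (Rr_H hK hR e0) => v [vI [vJ [ex ey]]].
have Px := sNa x cx; have Py := sNb y cy.
case: (proj2 (hP x (ex_intro _ v (conj vI ex))) Px) => v0 [v0I [Ov0 e0']].
case: (proj2 (hP' y (ex_intro _ v (conj vJ ey))) Py) => v1 [v1J [Ov1 e1']].
have ev0 : v0 = v by apply: injI => //; rewrite e0' ex.
have ev1 : v1 = v by apply: injJ => //; rewrite e1' ey.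
apply: (disj v); [by rewrite -ev0 | by rewrite -ev1].
Qed.

End Sep2.


Lemma open_forall_fin (T : topSpace) (I : finType) (P : I -> T -> Prop) :
  (forall i, isOpen (P i)) -> isOpen (fun x => forall i, P i x).
Proof.
move=> h.
have : forall s : seq I, isOpen (fun x => forall i, i \in s -> P i x).
  elim=> [|i s IH].
    by apply: (open_ext (A := fun _ => True)); [split => // _ i; rewrite in_nil | exact: open_T].
  apply: (open_ext (A := fun x => P i x /\ forall j, j \in s -> P j x)); last exact: open_I.
  move=> x; split.
    by move=> [h1 h2] j; rewrite in_cons; case/orP => [/eqP ->|]; auto.
  by move=> h1; split => [|j js]; apply: h1; rewrite in_cons ?eqxx ?js ?orbT.
move/(_ (enum I)) => o; apply: (open_ext _ o) => x; split => hx i; auto.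
by apply: hx; rewrite mem_enum.
Qed.

Section Foot.
Local Open Scope R_scope.
Context (X : topSpace) (d : X -> X -> R) (md : is_metric d)
  (hd : forall O, isOpen O <-> metric_open d O)
  (N : nat) (F : 'I_N -> X -> Prop) (oF : forall i, isOpen (F i)).

Definition Eg i x := fun r => 0 <= r <= 1 /\ forall y, d x y < r -> F i y.

Lemma Eg_bound i x : bound (Eg i x).
Proof. by exists 1 => r [[_ h] _]. Qed.
Lemma Eg_ne i x : exists r, Eg i x r.
Proof. exists 0; split; first lra. move=> y h; have := proj1 md x y; lra. Qed.

Definition g i x : R := proj1_sig (completeness (Eg i x) (Eg_bound i x) (Eg_ne i x)).

Lemma g_ub i x r : Eg i x r -> r <= g i x.
Proof. rewrite /g; case: completeness => m [h _] /=; exact: h. Qed.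
Lemma g_lub i x M : (forall r, Eg i x r -> r <= M) -> g i x <= M.
Proof. rewrite /g; case: completeness => m [_ h] /=; exact: h. Qed.
Lemma g_ge0 i x : 0 <= g i x.
Proof. case: (Eg_ne i x) => r hr; have := g_ub hr; case: hr; lra. Qed.

Lemma g_pos i x : F i x -> 0 < g i x.
Proof.
move=> Fx; case: ((proj1 (hd _) (oF i)) x Fx) => e [e0 he].
have : Eg i x (Rmin e 1).
  split; first by split; [apply: Rmin_glb; lra | apply: Rmin_r].
  move=> y hy; apply: he; have := Rmin_l e 1; lra.
move/g_ub; have : 0 < Rmin e 1 by apply: Rmin_glb_lt; lra.
lra.
Qed.

Lemma g_pos_inv i x : 0 < g i x -> F i x.
Proof.
move=> h; apply: NNPP => nF.
have : g i x <= 0.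
  apply: g_lub => r [hr hF]; apply: Rnot_lt_le => r0; apply: nF; apply: hF.
  by rewrite (proj2 (proj1 (proj2 md) x x) erefl); lra.
lra.
Qed.

Lemma g_lip i x y : g i x <= g i y + d x y.
Proof.
have [d0 [dE [dS dT]]] := md.
apply: g_lub => r [[r0 r1] hr].
case: (Rle_or_lt r (d x y)) => h; first by have := g_ge0 i y; lra.
have : Eg i y (r - d x y).
  split; first by have := d0 x y; lra.
  by move=> z hz; apply: hr; have := dT x y z; lra.
move/g_ub; lra.
Qed.

Lemma g_open_gt i c : isOpen (fun x => c < g i x).
Proof.
apply/hd => x hx; exists (g i x - c); split; first lra.
move=> y hy; have := g_lip i x y; lra.
Qed.

Lemma g_open_lt i c : isOpen (fun x => g i x < c).
Proof.
apply/hd => x hx; exists (c - g i x); split; first lra.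
move=> y hy; have := g_lip i y x; rewrite (proj1 (proj2 (proj2 md)) y x); lra.
Qed.

Lemma cl_gt i c (A : X -> Prop) x : (forall y, A y -> c < g i y) -> Defs.closure A x -> c <= g i x.
Proof.
move=> h cx; apply: Rnot_lt_le => hlt.
apply: (cl_open_disj (g_open_lt i c) hlt _ cx) => y hy Ay; have := h y Ay; lra.
Qed.

Lemma cl_lt i c (A : X -> Prop) x : (forall y, A y -> g i y < c) -> Defs.closure A x -> g i x <= c.
Proof.
move=> h cx; apply: Rnot_lt_le => hlt.
apply: (cl_open_disj (g_open_gt i c) hlt _ cx) => y hy Ay; have := h y Ay; lra.
Qed.


Context (delta : R) (dpos : 0 < delta) (hdel : forall x, exists i, delta < g i x).

Definition cc (m : nat) : R := delta / INR (m + 1).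

Lemma cc_pos m : 0 < cc m.
Proof.
rewrite /cc; apply: Rdiv_lt_0_compat => //; apply: lt_0_INR; apply/ltP; rewrite addn1.
done.
Qed.

Lemma cc_dec m n : (m < n)%N -> cc n < cc m.
Proof.
move=> h; rewrite /cc /Rdiv; apply: Rmult_lt_compat_l => //.
have h1 : 0 < INR (m + 1) by apply: lt_0_INR; apply/ltP; rewrite addn1.
have h2 : INR (m + 1) < INR (n + 1) by apply: lt_INR; apply/ltP; rewrite ltn_add2r.
apply: Rinv_lt_contravar => //; nra.
Qed.

Lemma cc_le m n : (m <= n)%N -> cc n <= cc m.
Proof.
rewrite leq_eqVlt; case/orP => [/eqP ->|h]; first lra.
by have := cc_dec h; lra.
Qed.

Lemma cc1 : cc 1 < delta.
Proof.
rewrite /cc /Rdiv; have -> : INR (1 + 1) = 2 by rewrite /= ; lra.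
lra.
Qed.

Definition Zs (I : {set 'I_N}) (x : X) : Prop :=
  I != set0 /\ forall i, if i \in I then cc (2 * #|I| - 1) < g i x else g i x < cc (2 * #|I|).

Lemma Zs_open I : isOpen (Zs I).
Proof.
case: (eqVneq I set0) => e.
  apply: (open_ext (A := fun _ => False)); last exact: open_empty.
  by move=> x; split => // [[]]; rewrite e eqxx.
apply: (open_ext (A := fun x => forall i, if i \in I then cc (2 * #|I| - 1) < g i x else g i x < cc (2 * #|I|))).
  by move=> x; split => [h|[]//]; split.
apply: open_forall_fin => i; case: (i \in I); [exact: g_open_gt | exact: g_open_lt].
Qed.

Lemma Zs_cl_ne I x : Defs.closure (Zs I) x -> I != set0.
Proof.
move=> c; apply: NNPP => /negP; rewrite negbK => /eqP e.
apply: (cl_empty (x := x)); apply: (cl_mono _ c) => y [h _]; move: h; by rewrite e eqxx.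
Qed.

Lemma Zs_cl_in I x i : Defs.closure (Zs I) x -> i \in I -> cc (2 * #|I| - 1) <= g i x.
Proof.
move=> c iI; apply: (cl_gt _ c) => y [_ h]; by have := h i; rewrite iI.
Qed.

Lemma Zs_cl_out I x i : Defs.closure (Zs I) x -> i \notin I -> g i x <= cc (2 * #|I|).
Proof.
move=> c iI; apply: (cl_lt _ c) => y [_ h]; have := h i; by rewrite (negbTE iI).
Qed.

Lemma Zs_cl_F I x i : Defs.closure (Zs I) x -> i \in I -> F i x.
Proof. move=> c iI; apply: g_pos_inv; have := Zs_cl_in c iI; have := cc_pos (2 * #|I| - 1); lra. Qed.

Lemma Zs_sep I J x : Defs.closure (Zs I) x -> Defs.closure (Zs J) x ->
  (I \subset J) \/ (J \subset I).
Proof.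
move=> cI cJ; apply: NNPP => hn.
have nIJ : ~~ (I \subset J) by apply/negP => h; apply: hn; left.
have nJI : ~~ (J \subset I) by apply/negP => h; apply: hn; right.
case/subsetPn: nIJ => i iI iJ; case/subsetPn: nJI => j jJ jI.
have a1 := Zs_cl_in cI iI; have a2 := Zs_cl_out cJ iJ.
have b1 := Zs_cl_in cJ jJ; have b2 := Zs_cl_out cI jI.
have kI : (0 < #|I|)%N by rewrite card_gt0; exact: (Zs_cl_ne cI).
have kJ : (0 < #|J|)%N by rewrite card_gt0; exact: (Zs_cl_ne cJ).
case: (leqP #|I| #|J|) => h.
  have : (2 * #|I| - 1 < 2 * #|J|)%N by rewrite ltn_subLR ?muln_gt0 //; lia.
  move/cc_dec; lra.
have : (2 * #|J| - 1 < 2 * #|I|)%N by rewrite ltn_subLR ?muln_gt0 //; lia.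
move/cc_dec; lra.
Qed.

Definition rltb (a b : R) : bool := if Rlt_dec a b then true else false.
Lemma rltbP a b : reflect (a < b) (rltb a b).
Proof. rewrite /rltb; case: Rlt_dec => h; constructor => //. Qed.

Definition Sm x (m : nat) : {set 'I_N} := [set i | rltb (cc (2 * m - 1)) (g i x)].

Lemma Sm_mono x m n : (m <= n)%N -> Sm x m \subset Sm x n.
Proof.
move=> h; apply/subsetP => i; rewrite !inE => /rltbP h1; apply/rltbP.
have : (2 * m - 1 <= 2 * n - 1)%N by apply: leq_sub2r; rewrite leq_mul2l h orbT.
move/cc_le; lra.
Qed.

Lemma Zs_cover_aux x : forall n m, (N - m = n)%N -> (1 <= m)%N -> (m <= N)%N ->
  (m <= #|Sm x m|)%N -> exists I, Zs I x.
Proof.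
elim=> [|n IH] m hn h1 h2 hP.
- have emN : m = N by lia.
  have cN : #|Sm x m| = m.
    apply/eqP; rewrite eqn_leq hP andbT; have := max_card (mem (Sm x m)); by rewrite card_ord emN.
  exists (Sm x m); split; first by rewrite -card_gt0 cN.
  move=> i; rewrite cN; case: ifP => [|hi]; first by rewrite inE => /rltbP.
  exfalso; move/negbT: hi; apply/negP/negPn.
  have : Sm x m = setT.
    apply/eqP; rewrite eqEcard subsetT cardsT card_ord cN emN leqnn.
    done.
  by move=> ->; rewrite inE.
- case: (boolP (m + 1 <= #|Sm x (m + 1)|)%N) => hP1.
    apply: (IH (m + 1)%N) => //; lia.
  have sub := Sm_mono x (leq_addr 1 m).
  have cN : #|Sm x m| = m.
    apply/eqP; rewrite eqn_leq hP andbT.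
    have := subset_leq_card sub; move: hP1; rewrite -ltnNge; lia.
  exists (Sm x m); split; first by rewrite -card_gt0 cN.
  move=> i; rewrite cN; case: ifP => [|hi]; first by rewrite inE => /rltbP.
  apply: Rnot_le_lt => hge.
  move/negP: hP1; apply.
  have iS : i \in Sm x (m + 1).
    rewrite inE; apply/rltbP.
    have : (2 * m < 2 * (m + 1) - 1)%N by lia.
    move/cc_dec; lra.
  have sub2 : i |: Sm x m \subset Sm x (m + 1) by rewrite subUset sub1set iS sub.
  have := subset_leq_card sub2; rewrite cardsU1 hi cN; lia.
Qed.

Lemma Zs_cover x : exists I, Zs I x.
Proof.
case: (hdel x) => i hi.
apply: (Zs_cover_aux (n := (N - 1)%N) (m := 1%N)) => //.
- by case: i {hi} => i hi /=; lia.
- rewrite card_gt0; apply/set0Pn; exists i; rewrite inE; apply/rltbP.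
  have -> : (2 * 1 - 1 = 1)%N by [].
  have := cc1; lra.
Qed.

End Foot.


Local Open Scope R_scope.
Lemma footprint (X : topSpace) (hX : metrizable X) (cX : compact_space X) (N : nat)
  (F : 'I_N -> X -> Prop) (oF : forall i, isOpen (F i)) (covF : forall x, exists i, F i x) :
  exists Zs : {set 'I_N} -> X -> Prop,
    (forall I, isOpen (Zs I)) /\
    (forall I x, Defs.closure (Zs I) x -> I != set0) /\
    (forall I x i, Defs.closure (Zs I) x -> i \in I -> F i x) /\
    (forall I J x, Defs.closure (Zs I) x -> Defs.closure (Zs J) x -> (I \subset J) \/ (J \subset I)) /\
    (forall x, exists I, Zs I x).
Proof.
case: hX => d [md hd].
pose C := fun O : X -> Prop => exists i r, (0 < r) /\ O = (fun x => (r < g md F i x)).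
have oC : forall O, C O -> isOpen O by move=> O [i [r [_ ->]]]; apply: g_open_gt.
have cov : forall x, (fun _ => True) x -> exists O, C O /\ O x.
  move=> x _; case: (covF x) => i Fi; have := g_pos md hd oF Fi => gp.
  exists (fun y => (g md F i x / 2 < g md F i y)); split; last lra.
  by exists i, (g md F i x / 2); split => //; lra.
case: (cX C oC cov) => l [hl hl'].
have : exists e, (0 < e) /\ forall O, In O l -> forall z, O z -> exists i, (e < g md F i z).
  elim: l hl {hl'} => [|O l IH] hl.
    by exists 1; split => [|O []]; lra.
  case: IH => [O' h|e [e0 he]]; first by apply: hl; right.
  case: (hl O (or_introl erefl)) => i [r [r0 ->]].
  exists (Rmin e r); split; first by apply: Rmin_glb_lt.
  move=> O' [<-|ii] z h.
    by exists i; have := Rmin_r e r; lra.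
  case: (he O' ii z h) => j hj; exists j; have := Rmin_l e r; lra.
case=> e [e0 he].
have hdel : forall x, exists i, (e < g md F i x).
  move=> x; case: (hl' x I) => O [ii Ox]; exact: he O ii x Ox.
exists (Zs md F e); split; first by move=> I; apply: Zs_open.
split; first by move=> I x; apply: Zs_cl_ne.
split; first by move=> I x i; apply: Zs_cl_F.
split; first by move=> I J x; apply: Zs_sep.
by move=> x; apply: Zs_cover.
Qed.

Local Close Scope R_scope.


Lemma compact_pullback (S T : topSpace) (Zs : S -> Prop) (Fs : T -> Prop) (f : S -> T)
  (Kc : T -> Prop) : homeo_onto Zs Fs f -> Defs.compact Kc -> (forall y, Kc y -> Fs y) ->
  Defs.compact (fun x => Zs x /\ Kc (f x)).
Proof.
move=> [[_ [inj om]] onto] cK sub C oC cov.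
pose C' := fun O' : T -> Prop => isOpen O' /\ exists O, C O /\
  forall y, (exists x, Zs x /\ f x = y) -> ((exists x, Zs x /\ O x /\ f x = y) <-> O' y).
have oC' : forall O, C' O -> isOpen O by move=> O [].
have cov' : forall y, Kc y -> exists O', C' O' /\ O' y.
  move=> y Ky; case: (proj1 (onto y) (sub y Ky)) => x [zx ex].
  have Ax : Zs x /\ Kc (f x) by rewrite ex.
  case: (cov x Ax) => O [CO Ox].
  case: (om O (oC O CO)) => O' [oO' hO'].
  exists O'; split; first by split => //; exists O.
  by apply/(hO' y); [exists x | exists x].
case: (cK C' oC' cov') => l' [hl hl'].
have : exists l, (forall O, In O l -> C O) /\ forall O', In O' l' -> exists O, In O l /\
    forall y, (exists x, Zs x /\ f x = y) -> ((exists x, Zs x /\ O x /\ f x = y) <-> O' y).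
  elim: l' hl {hl'} => [|O' l' IH] hl.
    by exists nil; split => // O [].
  case: IH => [O'' i|l [h1 h2]]; first by apply: hl; right.
  case: (hl O' (or_introl erefl)) => _ [O [CO hO]].
  exists (O :: l); split; first by move=> O2 [<-|i]; auto.
  move=> O2 [<-|i]; first by exists O; split => //; left.
  by case: (h2 O2 i) => O3 [? ?]; exists O3; split => //; right.
case=> l [h1 h2]; exists l; split => // x [zx Kx].
case: (hl' (f x) Kx) => O' [i O'x].
case: (h2 O' i) => O [iO hO].
case: (proj2 (hO (f x) (ex_intro _ x (conj zx erefl))) O'x) => x' [zx' [Ox' ex']].
by exists O; split => //; rewrite -(inj x' x zx' zx ex').
Qed.

Theorem mainTheorem16 (X : topSpace) (N : nat) (K : atlas_data X N) :
  compact_space X -> metrizable X -> tame_top_atlas K ->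
  exists V : forall I : {set 'I_N}, cU (ch K I) -> Prop, is_reduction K V.
Proof.
move=> cX hX hK.
pose F := fun i : 'I_N => cF (ch K [set i]).
have oF : forall i, isOpen (F i) by move=> i; case: (hcov hK) => h _; case: (h i).
have covF : forall x, exists i, F i x by case: (hcov hK).
case: (footprint hX cX oF covF) => Zs [oZ [neZ [FZ [sepZ covZ]]]].
pose A := fun I (x : cU (ch K I)) => zset (ch K I) x /\ Defs.closure (Zs I) (cpsi (ch K I) x).
have clZF : forall I, inIK K I -> forall p, Defs.closure (Zs I) p -> cF (ch K I) p.
  move=> I hI p c; apply/(FIeq hK hI) => i iI; exact: FZ I p i c iI.
have cA : forall I, inIK K I -> Defs.compact (A I).
  move=> I hI; apply: (compact_pullback (psihomeo hK hI)); last exact: clZF.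
  by apply: (compact_ext (A := fun _ => True)) => //; exact: cl_closed.
have pairW : forall I J, exists p : (cU (ch K I) -> Prop) * (cU (ch K J) -> Prop),
   isOpen p.1 /\ isOpen p.2 /\ (inIK K I -> forall x, A I x -> p.1 x) /\
   (inIK K J -> forall y, A J y -> p.2 y) /\
   (inIK K I -> inIK K J -> ~~ (I \subset J) -> ~~ (J \subset I) ->
      forall x y, Defs.closure p.1 x -> Defs.closure p.2 y -> ~ Rr I x J y).
  move=> I J.
  case: (classic (inIK K I /\ inIK K J /\ ~~ (I \subset J) /\ ~~ (J \subset I))) =>
     [[hI [hJ [nIJ nJI]]]|hn].
    case: (tube (bad := fun x y => Rr I x J y) (cA I hI) (cA J hJ)) =>
       [a b [za ca] [zb cb]|W1 [W2 [o1 [o2 [s1 [s2 h]]]]]].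
      apply: (sep_pt hK hX hI hJ nIJ nJI za zb) => e.
      rewrite -e in cb; case: (sepZ I J _ ca cb) => hs.
        by rewrite hs in nIJ.
      by rewrite hs in nJI.
    exists (W1, W2); split; [done|split; [done|split; [by move=> _|split; [by move=> _|by move=> _ _ _ _]]]].
  exists ((fun _ => True), (fun _ => True)); split; first exact: open_T.
  split; first exact: open_T.
  split => //; split => // hI hJ nIJ nJI; exfalso; apply: hn; auto.
pose W := fun I J => proj1_sig (constructive_indefinite_description _ (pairW I J)).
have hW := fun I J => proj2_sig (constructive_indefinite_description _ (pairW I J)).
have preP : forall I, exists P : cU (ch K I) -> Prop, isOpen P /\
    (inIK K I -> (forall x, A I x -> P x) /\ Defs.compact (Defs.closure P)).
  move=> I; case: (classic (inIK K I)) => hI.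
    case: (precompact_nbhd (metr hK hI) (lcomp hK hI) (cA I hI)) => P [oP [sP cP]].
    by exists P; split.
  by exists (fun _ => True); split; [exact: open_T | by []].
pose P := fun I => proj1_sig (constructive_indefinite_description _ (preP I)).
have hP := fun I => proj2_sig (constructive_indefinite_description _ (preP I)).
exists (fun I x => (inIK K I /\ exists z, Zs I z) /\ P I x /\
                   forall J, (W I J).1 x /\ (W J I).2 x).
split; [|split].
- move=> I hI; split; [|split].
  + case: (classic (inIK K I /\ exists z, Zs I z)) => hc.
      apply: (open_ext (A := fun x => P I x /\ forall J, (W I J).1 x /\ (W J I).2 x)).
        by move=> x; split => [h|[_ h]] //; split.
      apply: open_I; first exact: (proj1 (hP I)).
      apply: open_forall_fin => J; apply: open_I.
        exact: (proj1 (hW I J)).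
      exact: (proj1 (proj2 (hW J I))).
    apply: (open_ext (A := fun _ => False)); last exact: open_empty.
    by move=> x; split => // [[h _]].
  + rewrite /rel_compact.
    apply: (compact_ext (A := Defs.closure (P I))); last exact: cl_closed.
      by apply: cl_mono => x [_ [h _]].
    exact: (proj2 (proj2 (hP I) hI)).
  + move=> [x [[_ [z Zz]] _]].
    have Fz := clZF I hI z (cl_sub Zz).
    case: (psihomeo hK hI) => _ onto.
    case: (proj1 (onto z) Fz) => u [zu eu].
    have Au : A I u by split => //; rewrite eu; exact: cl_sub.
    exists u; split => //; split; first by split => //; exists z.
    split; first exact: (proj1 (proj2 (hP I) hI)).
    move=> J; split; first exact: (proj1 (proj2 (proj2 (hW I J))) hI).
    exact: (proj1 (proj2 (proj2 (proj2 (hW J I)))) hI).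
- move=> I J hI hJ [x [y [cx [cy e]]]].
  apply: NNPP => hn.
  have nIJ : ~~ (I \subset J) by apply/negP => h; apply: hn; left.
  have nJI : ~~ (J \subset I) by apply/negP => h; apply: hn; right.
  have R := equiv_Rr hK e (or_introl hI).
  apply: (proj2 (proj2 (proj2 (proj2 (hW I J)))) hI hJ nIJ nJI x y _ _ R).
    by apply: (cl_mono _ cx) => x' [_ [_ h]]; case: (h J).
  by apply: (cl_mono _ cy) => y' [_ [_ h]]; case: (h I).
- move=> I x hI zx.
  case: (covZ (cpsi (ch K I) x)) => J ZJ.
  have hJ : inIK K J.
    split; first exact: (neZ J _ (cl_sub ZJ)).
    by exists (cpsi (ch K I) x) => i iJ; exact: FZ J _ i (cl_sub ZJ) iJ.
  have Fp := clZF J hJ _ (cl_sub ZJ).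
  case: (psihomeo hK hJ) => _ onto.
  case: (proj1 (onto _) Fp) => u [zu eu].
  have Au : A J u by split => //; rewrite eu; exact: cl_sub.
  exists J, u; split => //; split.
    split; first by split => //; exists (cpsi (ch K I) x).
    split; first exact: (proj1 (proj2 (hP J) hJ)).
    move=> J'; split; first exact: (proj1 (proj2 (proj2 (hW J J'))) hJ).
    exact: (proj1 (proj2 (proj2 (proj2 (hW J' J)))) hJ).
  by apply: (zero_equiv hK hI hJ zx zu); rewrite eu.
Qed.
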